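(* Consider the UAV-SAR coverage maximization problem (P.1) described in the context, with all system parameters fixed (in particular $\delta_t>0$, $P_{\mathrm{prop}}>0$, $q_{\mathrm{start}}\ge 0$ finite, and $M$ a fixed positive integer). Then the set of numbers of azimuth sweeps $N\in\mathbb{N}$ for which problem (P.1) with that $N$ has a feasible point is finite.
   Context: Fixed system parameters: a time-slot duration $\delta_t>0$; a UAV speed $v>0$; $\Delta_y=\delta_t v$; a positive integer $M$ (number of time slots per azimuth sweep, with $L=M\Delta_y$); a radar depression angle $\theta_d$ and 3dB beamwidth $\Theta_{3\mathrm{dB}}$, with $\theta_1=\theta_d-\Theta_{3\mathrm{dB}}/2$ and $\theta_2=\theta_d+\Theta_{3\mathrm{dB}}/2$; altitude bounds $0<z_{\min}\le z_{\max}$; maximal powers $P_{\mathrm{sar}}^{\max},P_{\mathrm{com}}^{\max}\ge 0$; a constant propulsion power $P_{\mathrm{prop}}>0$; an initial battery energy $q_{\mathrm{start}}\ge 0$; a base station position $\mathbf b=(x_b,y_b,z_b)$; positive constants $B_r,B_c,\tau_p,\mathrm{PRF},c,\gamma,R_{\mathrm{sl}},\mathrm{SNR}_{\min}$ and a positive constant $K$ (collecting $G_tG_r\lambda^3\sigma_0 c\tau_p\mathrm{PRF}\sin^2(\theta_d)/((4\pi)^4 k T_o NF B_r L_{\mathrm{tot}} v)$); and $\Omega=\frac{\cos\theta_1-\cos\theta_2}{\cos\theta_1\cos\theta_2}$. For a given number of azimuth sweeps $N\in\mathbb{N}$, time slots are indexed by $n\in\{1,\dots,NM\}$. Let $\mathcal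 A=\{k\in\{1,\dots,NM\}:(k-1)\bmod M\neq 0\}$ and $\mathcal A^c=\{1,M+1,\dots,(N-1)M+1\}$. The $y$-coordinates are fixed: $y(1)=0$, $y(n+1)=y(n)+c(n)\Delta_y$ for $n\in\{1,\dots,NM-1\}$, where $c(n)=1$ if $\lceil n/M\rceil$ is odd and $c(n)=-1$ otherwise. The optimization variables are real vectors $x(n),z(n),q(n),P_{\mathrm{sar}}(n),P_{\mathrm{com}}(n)$, $n=1,\dots,NM$. Define $d(n)=\sqrt{(x(n)-x_b)^2+(y(n)-y_b)^2+(z(n)-z_b)^2}$, $R(n)=B_c\log_2\!\big(1+\frac{P_{\mathrm{com}}(n)\gamma}{d^2(n)}\big)$, $R_{\min}(n)=B_r\big(\frac{2z(n)\Omega}{c}+\tau_p\big)\mathrm{PRF}$, and $\mathrm{SNR}(n)=\frac{K\,P_{\mathrm{sar}}(n)}{z(n)^3}$. Problem (P.1) for given $N$: maximize $C=\sum_{n=1}^{NM}\Delta_y z(n)(\tan\theta_2-\tan\theta_1)$ subject to C1: $x(1)=-\tan(\theta_1)z(1)$; C2: $x(n)=x(n-1)+z(n-1)\tan\theta_2-z(n)\tan\theta_1$ for all $n\in\mathcal A^c\setminus\{1\}$; C3: $x(n+1)=x(n)$ for all $n\in\mathcal A$; C4: $z(n+1)=z(n)$ for all $n\in\mathcal A$; C5: $P_{\mathrm{sar}}(n+1)=P_{\mathrm{sar}}(n)$ for all $n\in\mathcal A$; C6: $z_{\min}\le z(n)\le z_{\max}$ for all $n$; C7: $\mathrm{SNR}(n)\ge\mathrm{SNR}_{\min}$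 for all $n$; C8: $R(n)\ge R_{\min}(n)+R_{\mathrm{sl}}$ for all $n$; C9: $0\le P_{\mathrm{sar}}(n)\le P_{\mathrm{sar}}^{\max}$ and $0\le P_{\mathrm{com}}(n)\le P_{\mathrm{com}}^{\max}$ for all $n$; C10: $q(1)=q_{\mathrm{start}}$ and $q(n)\ge 0$ for all $n$; C11: $q(n+1)=q(n)-\delta_t\big(P_{\mathrm{com}}(n)+P_{\mathrm{sar}}(n)+P_{\mathrm{prop}}\big)$ for all $n\in\{1,\dots,NM-1\}$. A feasible point for $N$ is an assignment of the variables satisfying C1–C11. *)

(* Defs.v *)
From Stdlib Require Import Reals Lra Lia Arith.
From Stdlib Require Export Ensembles Finite_sets.
Open Scope R_scope.

Record params := mkParams {
  delta_t : R; v : R; M : nat;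
  theta_d : R; Theta3dB : R;
  z_min : R; z_max : R;
  Psar_max : R; Pcom_max : R; P_prop : R; q_start : R;
  x_b : R; y_b : R; z_b : R;
  B_r : R; B_c : R; tau_p : R; PRF : R; c_light : R; gamma : R;
  R_sl : R; SNR_min : R; K : R }.

Section Problem.
Variable p : params.

Definition Delta_y : R := delta_t p * v p.
Definition theta1 : R := theta_d p - Theta3dB p / 2.
Definition theta2 : R := theta_d p + Theta3dB p / 2.
Definition Omega : R :=
  (cos theta1 - cos theta2) / (cos theta1 * cos theta2).

Definition ceil_div (n m : nat) : nat := (n + m - 1) / m.

Definition cdir (n : nat) : R :=
  if Nat.odd (ceil_div n (M p)) then 1 else -1.

Fixpoint ycoord (n : nat) : R :=
  match n with
  | O => 0
  | S O => 0
  | S ((S _) as m) => ycoord m + cdir m * Delta_y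
  end.

Definition inA (N k : nat) : Prop :=
  (1 <= k <= N * M p)%nat /\ ((k - 1) mod M p <> 0)%nat.
Definition inAc (N k : nat) : Prop :=
  exists j : nat, (j < N)%nat /\ k = (j * M p + 1)%nat.

Definition log2 (r : R) : R := ln r / ln 2.

Definition dist_bs (x z : nat -> R) (n : nat) : R :=
  sqrt ((x n - x_b p)^2 + (ycoord n - y_b p)^2 + (z n - z_b p)^2).
Definition rate (x z Pcom : nat -> R) (n : nat) : R :=
  B_c p * log2 (1 + Pcom n * gamma p / (dist_bs x z n)^2).
Definition Rmin (z : nat -> R) (n : nat) : R :=
  B_r p * (2 * z n * Omega / c_light p + tau_p p) * PRF p.
Definition SNR (z Psar : nat -> R) (n : nat) : R :=
  K p * Psar n / (z n)^3.

(* Feasibility of (P.1) for a given number N of azimuth sweeps.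
   Variables are sequences indexed by nat; only indices 1..N*M matter. *)
Definition feasible (N : nat) : Prop :=
  exists x z q Psar Pcom : nat -> R,
    x 1%nat = - tan theta1 * z 1%nat /\
    (forall n, inAc N n -> n <> 1%nat ->
                x n = x (n-1)%nat + z (n-1)%nat * tan theta2 - z n * tan theta1) /\
    (forall n, inA N n -> (n + 1 <= N * M p)%nat -> x (n+1)%nat = x n) /\
    (forall n, inA N n -> (n + 1 <= N * M p)%nat -> z (n+1)%nat = z n) /\
    (forall n, inA N n -> (n + 1 <= N * M p)%nat -> Psar (n+1)%nat = Psar n) /\
    (forall n, (1 <= n <= N * M p)%nat ->
       z_min p <= z n <= z_max p /\
       SNR z Psar n >= SNR_min p /\
       rate x z Pcom n >= Rmin z n + R_sl p /\
       0 <= Psar n <= Psar_max p /\ 0 <= Pcom n <= Pcom_max p /\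
       q n >= 0) /\
    q 1%nat = q_start p /\
    (forall n, (1 <= n <= N * M p - 1)%nat ->
                q (n+1)%nat = q n - delta_t p * (Pcom n + Psar n + P_prop p)).

Definition standing_assumptions : Prop :=
  delta_t p > 0 /\ v p > 0 /\ (M p > 0)%nat /\
  0 < z_min p <= z_max p /\
  Psar_max p >= 0 /\ Pcom_max p >= 0 /\ P_prop p > 0 /\ q_start p >= 0 /\
  B_r p > 0 /\ B_c p > 0 /\ tau_p p > 0 /\ PRF p > 0 /\ c_light p > 0 /\
  gamma p > 0 /\ R_sl p > 0 /\ SNR_min p > 0 /\ K p > 0.

End Problem.

(* Main.v *)
Require Import Defs.
From Stdlib Require Import Reals Ensembles Finite_sets.
From Stdlib Require Import Lra Lia ZArith Finite_sets_facts.

Lemma fin_le (B : nat) : Finite nat (fun N : nat => (N <= B)%nat).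
Proof.
  induction B.
  - assert (E : (fun N : nat => (N <= 0)%nat) = Add nat (Empty_set nat) 0%nat).
    { apply Extensionality_Ensembles; split; intros x Hx; unfold In in *.
      + assert (x = 0%nat) by lia; subst. right. constructor.
      + destruct Hx as [x Hx|x Hx]; [destruct Hx|destruct Hx; unfold In; lia]. }
    rewrite E. constructor; [constructor| intros H; destruct H].
  - assert (E : (fun N : nat => (N <= S B)%nat) = Add nat (fun N => (N <= B)%nat) (S B)).
    { apply Extensionality_Ensembles; split; intros x Hx; unfold In in *.
      + destruct (Nat.eq_dec x (S B)). subst; right; constructor.
        left. unfold In. lia.
      + destruct Hx as [x Hx|x Hx]; unfold In in *; [lia|destruct Hx; lia]. }
    rewrite E. constructor; auto. unfold In. lia.
Qed.

Lemma q_bound (p : params) (N : nat) (x z q Psar Pcom : nat -> R) :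
  (forall n, (1 <= n <= N * M p)%nat -> 0 <= Psar n /\ 0 <= Pcom n) ->
  q 1%nat = q_start p ->
  (forall n, (1 <= n <= N * M p - 1)%nat ->
     q (n+1)%nat = q n - delta_t p * (Pcom n + Psar n + P_prop p)) ->
  delta_t p > 0 ->
  forall k, (1 <= k <= N * M p)%nat ->
    q k <= q_start p - INR (k - 1) * (delta_t p * P_prop p).
Proof.
  intros HP Hq1 Hq Hd k. induction k as [|k IH]; intros Hk; [lia|].
  destruct k as [|k'].
  - simpl. rewrite Hq1. lra.
  - set (k := S k') in *.
    assert (Hs : S k = (k + 1)%nat) by lia. rewrite Hs.
    rewrite Hq by lia.
    specialize (IH ltac:(lia)). destruct (HP k ltac:(lia)) as [H1 H2].
    replace ((k + 1 - 1)%nat) with (S (k - 1)) by lia.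
    rewrite S_INR.
    assert (0 <= delta_t p * Pcom k) by (apply Rmult_le_pos; lra).
    assert (0 <= delta_t p * Psar k) by (apply Rmult_le_pos; lra).
    nra.
Qed.

Theorem proposition1 (p : params) :
  standing_assumptions p ->
  Finite nat (fun N : nat => feasible p N).
Proof.
  intros SA.
  destruct SA as (Hd & _ & HM & _ & _ & _ & HP & Hqs & _).
  set (C := q_start p / (delta_t p * P_prop p)).
  assert (HdP : delta_t p * P_prop p > 0) by (apply Rmult_lt_0_compat; lra).
  destruct (archimed C) as [Hup _].
  set (B := Z.to_nat (up C)).
  apply Finite_downward_closed with (A := fun N => (N <= S B)%nat); [apply fin_le|].
  intros N HN. unfold In in *.
  destruct N as [|N']; [lia|].
  destruct HN as (x & z & q & Psar & Pcom & _ & _ & _ & _ & _ & Hall & Hq1 & Hq).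
  assert (HPP : forall n, (1 <= n <= S N' * M p)%nat -> 0 <= Psar n /\ 0 <= Pcom n).
  { intros n Hn. destruct (Hall n Hn) as (_ & _ & _ & [A _] & [A' _] & _). lra. }
  assert (Hk : (1 <= S N' * M p <= S N' * M p)%nat) by nia.
  pose proof (q_bound p (S N') x z q Psar Pcom HPP Hq1 Hq Hd _ Hk) as Hb.
  destruct (Hall _ Hk) as (_ & _ & _ & _ & _ & Hq0).
  assert (Hle : INR (S N' * M p - 1) <= C).
  { unfold C. apply Rmult_le_reg_r with (delta_t p * P_prop p); [lra|].
    unfold Rdiv. rewrite Rmult_assoc, Rinv_l by lra. lra. }
  assert (Hle2 : INR N' <= INR (S N' * M p - 1)) by (apply le_INR; nia).
  assert (HupPos : (0 < up C)%Z).
  { apply lt_IZR. pose proof (pos_INR N'). simpl. lra. }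
  assert (HB : INR B = IZR (up C)).
  { unfold B. rewrite INR_IZR_INZ, Z2Nat.id by lia. reflexivity. }
  assert (INR N' < INR B) by lra.
  apply INR_lt in H. lia.
Qed.
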